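(* Let $G_n=(V_n,E)$ be a directed acyclic graph on $n$ vertices, let $H$ be a $2$-TC-spanner of $G_n$, and let $f:V_n\to\mathbb{R}$ be $\epsilon$-far from monotone. Then at least $\frac{\epsilon n}{2}$ edges $(x,y)$ of $H$ are violated by $f$, i.e. satisfy $f(x)>f(y)$.
   Context: For a digraph $G=(V,E)$, $TC(G)$ denotes its transitive closure (edge $(u,v)$ iff $v$ is reachable from $u$ by a directed path). A $k$-TC-spanner of $G$ is a digraph $H=(V,E_H)$ with $E_H\subseteq E(TC(G))$ such that $d_H(u,v)\le k$ whenever $v$ is reachable from $u$ in $G$. $f:V_n\to\mathbb{R}$ is monotone on $G_n$ if $f(x)\le f(y)$ for all $(x,y)\in E$, and $\epsilon$-far from monotone if $\min_{g\text{ monotone}}|\{x:f(x)\neq g(x)\}|\ge\epsilon n$. *)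

(* Defs.v *)
From HB Require Import structures.
From mathcomp Require Import all_boot all_order all_algebra.
Set Implicit Arguments. Unset Strict Implicit. Unset Printing Implicit Defensive.
Import Order.TTheory GRing.Theory Num.Theory.

Definition reachable (V : finType) (E : rel V) (u v : V) : bool :=
  [exists w, E u w && connect E w v].

Definition acyclic_digraph (V : finType) (E : rel V) : Prop :=
  forall x : V, ~~ reachable E x x.

Definition dist_le2 (V : finType) (H : rel V) (u v : V) : bool :=
  [|| u == v, H u v | [exists w, H u w && H w v]].

Definition TC_spanner2 (V : finType) (E H : rel V) : Prop :=
  (forall u v, H u v -> reachable E u v) /\
  (forall u v, reachable E u v -> dist_le2 H u v).

Definition monotone_on (V : finType) (R : realFieldType) (E : rel V)
  (f : V -> R) : Prop :=
  forall x y, E x y -> (f x <= f y)%R.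

Definition eps_far (V : finType) (R : realFieldType) (E : rel V)
  (f : V -> R) (eps : R) : Prop :=
  forall g : V -> R, monotone_on E g ->
    (eps * #|V|%:R <= #|[set x | f x != g x]|%:R)%R.

Definition num_violated (V : finType) (R : realFieldType) (H : rel V)
  (f : V -> R) : nat :=
  #|[set e : V * V | H e.1 e.2 && (f e.2 < f e.1)%R]|.

(* Main.v *)
Require Import Defs.
From HB Require Import structures.
From mathcomp Require Import all_boot all_order all_algebra.
Import Order.TTheory GRing.Theory Num.Theory.

Lemma connect_reach (V : finType) (E : rel V) u v :
  connect E u v -> u = v \/ reachable E u v.
Proof.
move/connectP=> [[|w p] Hp ->]; first by left.
right; apply/existsP; exists w; move: Hp => /= /andP[Huw Hp].
by rewrite Huw; apply/connectP; exists p.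
Qed.

Theorem mainTheorem2 (R : realFieldType) (V : finType) (E H : rel V)
  (f : V -> R) (eps : R) :
  acyclic_digraph E -> TC_spanner2 E H -> eps_far E f eps ->
  (eps * #|V|%:R / 2%:R <= (num_violated H f)%:R)%R.
Proof.
move=> _ [_ Hsp] Hfar.
set S := [set e : V * V | H e.1 e.2 && (f e.2 < f e.1)%R].
set C := [set e.1 | e in S] :|: [set e.2 | e in S].
have HC1 : forall a b, H a b -> a \notin C -> (f a <= f b)%R.
  move=> a b Hab HaC; rewrite leNgt; apply/negP=> Hlt; move/negP: HaC; apply.
  by rewrite inE; apply/orP; left; apply/imsetP; exists (a, b); rewrite // inE Hab Hlt.
have HC2 : forall a b, H a b -> b \notin C -> (f a <= f b)%R.
  move=> a b Hab HbC; rewrite leNgt; apply/negP=> Hlt; move/negP: HbC; apply.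
  by rewrite inE; apply/orP; right; apply/imsetP; exists (a, b); rewrite // inE Hab Hlt.
have mono : forall u v, u \notin C -> v \notin C -> connect E u v -> (f u <= f v)%R.
  move=> u v HuC HvC /connect_reach [->|Hr]; first by [].
  case/or3P: (Hsp u v Hr) => [/eqP ->|Huv|/existsP[w /andP[Huw Hwv]]] //.
    exact: HC1.
  exact: le_trans (HC1 _ _ Huw HuC) (HC2 _ _ Hwv HvC).
set m := \big[Order.min/0%R]_u f u.
have Hm : forall u, (m <= f u)%R by move=> u; exact: bigmin_le.
set g := fun v => \big[Order.max/m]_(u | (u \notin C) && connect E u v) f u.
have gmono : monotone_on E g.
  move=> x y Exy; rewrite /g; apply: bigmax_le; first exact: bigmax_ge_id.
  move=> i /andP[HiC Hix]; apply: le_bigmax_cond; rewrite HiC /=.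
  exact: connect_trans Hix (connect1 Exy).
have gf : forall u, u \notin C -> g u = f u.
  move=> u HuC; apply/eqP; rewrite eq_le; apply/andP; split.
    apply: bigmax_le => // i /andP[HiC Hiu]; exact: mono.
  by apply: le_bigmax_cond; rewrite HuC connect0.
have Hsub : [set x | f x != g x] \subset C.
  apply/subsetP=> x; rewrite inE; apply: contraR=> HxC; by rewrite gf.
have H1 := Hfar g gmono.
have H2 : (#|C| <= 2 * num_violated H f)%N.
  rewrite /num_violated -/S; apply: leq_trans (leq_card_setU _ _) _.
  by rewrite mul2n -addnn leq_add // leq_imset_card.
have H3 : (eps * #|V|%:R <= (2 * num_violated H f)%:R)%R.
  apply: le_trans H1 _; rewrite ler_nat; exact: leq_trans (subset_leq_card Hsub) H2.
rewrite ler_pdivrMr ?ltr0n //; apply: le_trans H3 _; by rewrite natrM mulrC.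
Qed.
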